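(* Let $d\ge2$, $n\in\mathbb N$, and let $T\subset[0,1)^d$ be a finite set such that $2\pi T:=\{2\pi\mathbf x:\mathbf x\in T\}$ provides universal discretization in $L_\infty$ for the collection $\mathcal C(n,d)$ with constant $C_1(d)>0$, i.e. $C_1(d)\|f\|_\infty\le\max_{\xi\in2\pi T}|f(\xi)|$ for every $f\in\mathcal T(R(\mathbf s))$ and every $\mathbf s\in\mathbb Z_+^d$ with $\|\mathbf s\|_1=n$. Then there exists a constant $C(d)>0$, depending only on $d$ and $C_1(d)$ (not on $n$ or $T$), such that $\mathrm{disp}(T)\le C(d)2^{-n}$.
   Context: $\mathbb T^d:=[0,2\pi)^d$; $\|f\|_\infty:=\sup_{\mathbf x}|f(\mathbf x)|$. For $\mathbf x<\mathbf y$ in $[0,1)^d$ (coordinatewise), $[\mathbf x,\mathbf y):=[x_1,y_1)\times\cdots\times[x_d,y_d)$, and $\mathcal B$ is the set of all such boxes. The dispersion of a finite $T\subset[0,1)^d$ is $\mathrm{disp}(T):=\sup\{\mathrm{vol}(B):B\in\mathcal B,\ B\cap T=\emptyset\}$. For finite $Q\subset\mathbb Z^d$, $\mathcal T(Q)$ is the space of trigonometric polynomials $\sum_{\mathbf k\in Q}c_{\mathbf k}e^{i(\mathbf k,\mathbf x)}$. For $\mathbf s\in\mathbb Z_+^d$, $R(\mathbf s):=\{\mathbf k\in\mathbb Z^d:|k_j|<2^{s_j}\ \forall j\}$ and $\mathcal C(n,d):=\{\mathcal T(R(\mathbf s)):\|\mathbf s\|_1=n\}$. *)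

(* Defs.v *)
From Stdlib Require Import Reals List ZArith Lra.
Import ListNotations.
Open Scope R_scope.

(* Points of R^d are functions nat -> R; only coordinates 0..d-1 matter.
   Frequencies k in Z^d are functions nat -> Z. *)

Definition sumd (d : nat) (g : nat -> R) : R :=
  fold_right Rplus 0 (map g (seq 0 d)).
Definition prodd (d : nat) (g : nat -> R) : R :=
  fold_right Rmult 1 (map g (seq 0 d)).

Definition dotk (d : nat) (k : nat -> Z) (x : nat -> R) : R :=
  sumd d (fun j => IZR (k j) * x j).

(* A trigonometric polynomial sum_k c_k e^{i(k,x)} is given by a finite list
   of terms (k, (Re c_k, Im c_k)). *)
Definition trig_poly := list ((nat -> Z) * (R * R)).

Definition tp_re (d : nat) (f : trig_poly) (x : nat -> R) : R :=
  fold_right Rplus 0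
    (map (fun t => let '(k, (a, b)) := t in
                   a * cos (dotk d k x) - b * sin (dotk d k x)) f).
Definition tp_im (d : nat) (f : trig_poly) (x : nat -> R) : R :=
  fold_right Rplus 0
    (map (fun t => let '(k, (a, b)) := t in
                   a * sin (dotk d k x) + b * cos (dotk d k x)) f).

Definition tp_abs (d : nat) (f : trig_poly) (x : nat -> R) : R :=
  sqrt (tp_re d f x ^ 2 + tp_im d f x ^ 2).

Definition in_Rs (d : nat) (s : nat -> nat) (k : nat -> Z) : Prop :=
  forall j, (j < d)%nat -> (Z.abs (k j) < 2 ^ Z.of_nat (s j))%Z.

Definition in_TRs (d : nat) (s : nat -> nat) (f : trig_poly) : Prop :=
  Forall (fun t => in_Rs d s (fst t)) f.

Definition l1 (d : nat) (s : nat -> nat) : nat :=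
  fold_right Nat.add 0%nat (map s (seq 0 d)).

Definition in_torus (d : nat) (x : nat -> R) : Prop :=
  forall j, (j < d)%nat -> 0 <= x j < 2 * PI.

Definition sup_norm (d : nat) (f : trig_poly) : R -> Prop :=
  is_lub (fun r => exists x, in_torus d x /\ r = tp_abs d f x).

Definition max_on (d : nat) (f : trig_poly) (T : list (nat -> R)) : R :=
  fold_right Rmax 0 (map (fun t => tp_abs d f (fun j => 2 * PI * t j)) T).

Definition in_unit_cube (d : nat) (x : nat -> R) : Prop :=
  forall j, (j < d)%nat -> 0 <= x j < 1.

Definition is_box (d : nat) (x y : nat -> R) : Prop :=
  in_unit_cube d x /\ in_unit_cube d y /\ forall j, (j < d)%nat -> x j < y j.

Definition in_box (d : nat) (x y t : nat -> R) : Prop :=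
  forall j, (j < d)%nat -> x j <= t j < y j.

Definition vol (d : nat) (x y : nat -> R) : R := prodd d (fun j => y j - x j).

Definition disp (d : nat) (T : list (nat -> R)) : R -> Prop :=
  is_lub (fun v => exists x y, is_box d x y /\
            (forall t, In t T -> ~ in_box d x y t) /\ v = vol d x y).

Definition univ_disc (d n : nat) (T : list (nat -> R)) (C1 : R) : Prop :=
  forall (s : nat -> nat) (f : trig_poly), l1 d s = n -> in_TRs d s f ->
    forall nf, sup_norm d f nf -> C1 * nf <= max_on d f T.

(* Main.v *)
Require Import Defs.
From Stdlib Require Import Reals List ZArith Lra Lia Classical ClassicalEpsilon.
From Coquelicot Require Import Coquelicot.
Import ListNotations.
Open Scope R_scope.

Definition expi (t:R) : C := (cos t, sin t).
Definition csum {A} (F : A -> C) (l : list A) : C := fold_right Cplus 0%C (map F l).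
Definition rprod {A} (F : A -> R) (l : list A) : R := fold_right Rmult 1 (map F l).

Lemma expi_add a b : expi (a+b) = (expi a * expi b)%C.
Proof. unfold expi, Cmult; simpl. rewrite cos_plus, sin_plus. f_equal; ring. Qed.

Lemma Cmod_expi a : Cmod (expi a) = 1.
Proof. unfold Cmod, expi. change (fst (cos a, sin a)) with (cos a). change (snd (cos a, sin a)) with (sin a).
  pose proof (sin2_cos2 a). unfold Rsqr in H.
  replace (cos a ^ 2 + sin a ^ 2) with 1 by (rewrite <- H; ring). apply sqrt_1. Qed.

Lemma csum_scal {A} (c : C) (F : A -> C) l : csum (fun x => c * F x)%C l = (c * csum F l)%C.
Proof. induction l; simpl. unfold csum; simpl; ring. unfold csum in *; simpl. rewrite IHl. ring. Qed.

Lemma csum_app {A} (F : A -> C) l1 l2 : csum F (l1 ++ l2) = (csum F l1 + csum F l2)%C.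
Proof. induction l1; unfold csum in *; simpl. ring. rewrite IHl1; ring. Qed.

Lemma csum_flat {A B} (F : B -> C) (g : A -> list B) l :
  csum F (flat_map g l) = csum (fun x => csum F (g x)) l.
Proof. induction l; simpl. reflexivity. rewrite csum_app, IHl. reflexivity. Qed.

Lemma csum_ext {A} (F G : A -> C) l : (forall x, In x l -> F x = G x) -> csum F l = csum G l.
Proof. intros H; unfold csum; f_equal; apply map_ext_in; auto. Qed.

Lemma csum_map {A B} (F : B -> C) (g : A -> B) l : csum F (map g l) = csum (fun x => F (g x)) l.
Proof. unfold csum; rewrite map_map; reflexivity. Qed.

Lemma Cmod_csum_le {A} (F : A -> C) l : Cmod (csum F l) <= fold_right Rplus 0 (map (fun x => Cmod (F x)) l).
Proof. induction l; unfold csum in *; simpl. rewrite Cmod_0; lra.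
  eapply Rle_trans. apply Cmod_triangle. lra. Qed.

Definition Dir (M : nat) (th : R) : C := csum (fun a => expi (INR a * th)) (seq 0 M).

Lemma Dir_S M th : Dir (S M) th = (1 + expi th * Dir M th)%C.
Proof. unfold Dir. simpl. rewrite <- seq_shift. unfold csum at 1. simpl. fold (csum (fun a : nat => expi (INR a * th)) (map S (seq 0 M))). rewrite csum_map.
  rewrite <- csum_scal. f_equal.
  - unfold expi. rewrite Rmult_0_l, cos_0, sin_0. reflexivity.
  - unfold csum; f_equal; apply map_ext; intros a. rewrite S_INR.
    rewrite <- expi_add. f_equal; ring. Qed.

Lemma Dir_id M th : (Dir M th * (expi th - 1))%C = (expi (INR M * th) - 1)%C.
Proof. induction M.
  - unfold Dir, csum; simpl. unfold expi. rewrite Rmult_0_l, cos_0, sin_0. 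
    apply injective_projections; simpl; ring.
  - rewrite Dir_S. rewrite S_INR. replace ((INR M + 1) * th) with (th + INR M * th) by ring.
    rewrite expi_add. 
    transitivity (expi th - 1 + expi th * (Dir M th * (expi th - 1)))%C. ring.
    rewrite IHM. ring. Qed.

Lemma Cmod_expi_m1 th : Cmod (expi th - 1)%C = 2 * Rabs (sin (th/2)).
Proof. unfold Cmod, expi. 
  replace ((cos th, sin th) - 1)%C with ((cos th - 1, sin th - 0) : C) by (apply injective_projections; simpl; ring).
  change (fst (cos th - 1, sin th - 0)) with (cos th - 1). change (snd (cos th - 1, sin th - 0)) with (sin th - 0).
  replace th with (2 * (th/2)) at 1 2 by field.
  rewrite cos_2a_sin, sin_2a.
  pose proof (sin2_cos2 (th/2)). unfold Rsqr in H.
  replace ((1 - 2 * sin (th / 2) * sin (th / 2) - 1) ^ 2 + (2 * sin (th / 2) * cos (th / 2) - 0) ^ 2)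
    with (Rsqr (2 * sin (th/2))).
  rewrite sqrt_Rsqr_abs, Rabs_mult, Rabs_right by lra. reflexivity.
  unfold Rsqr. nra. Qed.

Lemma Dir_bound M th : sin (th/2) <> 0 -> Cmod (Dir M th) <= 1 / Rabs (sin (th/2)).
Proof. intros H.
  assert (Hp : 0 < Rabs (sin (th/2))) by (apply Rabs_pos_lt; auto).
  pose proof (Dir_id M th) as E. apply (f_equal Cmod) in E.
  rewrite Cmod_mult, Cmod_expi_m1 in E.
  assert (Cmod (expi (INR M * th) - 1) <= 2).
  { eapply Rle_trans. unfold Cminus. apply Cmod_triangle. rewrite Cmod_expi, Cmod_opp, Cmod_1. lra. }
  apply (Rmult_le_reg_r (2 * Rabs (sin (th/2)))). lra.
  rewrite E. field_simplify. lra. lra. Qed.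

Lemma Dir_le_M M th : Cmod (Dir M th) <= INR M.
Proof. unfold Dir. eapply Rle_trans. apply Cmod_csum_le.
  rewrite <- (length_seq M 0) at 2. generalize (seq 0 M). induction l; simpl. lra.
  rewrite Cmod_expi. destruct (length l); simpl in *; lra. Qed.

Lemma Dir_0 M : Cmod (Dir M 0) = INR M.
Proof. unfold Dir. rewrite <- (length_seq M 0) at 2. generalize (seq 0 M).
  assert (forall l : list nat, csum (fun a => expi (INR a * 0)) l = (INR (length l), 0)).
  { induction l; unfold csum in *; cbn [map fold_right length]. reflexivity. rewrite IHl. unfold expi.
    rewrite Rmult_0_r, cos_0, sin_0. rewrite S_INR. apply injective_projections; simpl; ring. }
  intros l. rewrite H. unfold Cmod. change (fst (INR (length l), 0)) with (INR (length l)). change (snd (INR (length l), 0)) with 0. replace (INR (length l) ^ 2 + 0 ^ 2) with (Rsqr (INR (length l))) by (unfold Rsqr; ring).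
  rewrite sqrt_Rsqr_abs. apply Rabs_right. apply Rle_ge, pos_INR. Qed.

Definition upd (k : nat -> Z) (j : nat) (v : Z) : nat -> Z := fun i => if Nat.eqb i j then v else k i.

Fixpoint Lidx (s : nat -> nat) (l : list nat) : list (nat -> Z) :=
  match l with
  | [] => [fun _ => 0%Z]
  | j :: l' => flat_map (fun k => map (fun a => upd k j (Z.of_nat a)) (seq 0 (2 ^ s j))) (Lidx s l')
  end.

Definition dotl (l : list nat) (k : nat -> Z) (y : nat -> R) : R :=
  fold_right Rplus 0 (map (fun j => IZR (k j) * y j) l).

Lemma dotl_upd l k j v y : ~ In j l -> dotl l (upd k j v) y = dotl l k y.
Proof. induction l; simpl; intros H. reflexivity.
  unfold dotl in *; simpl. rewrite IHl by tauto. unfold upd.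
  destruct (Nat.eqb_spec a j). subst; tauto. reflexivity. Qed.

Lemma dotl_sub l k x c : dotl l k x - dotl l k c = dotl l k (fun j => x j - c j).
Proof. induction l; unfold dotl in *; simpl. ring. rewrite <- IHl. ring. Qed.

Lemma Lidx_range s l k : In k (Lidx s l) -> forall j, In j l -> (0 <= k j < 2 ^ Z.of_nat (s j))%Z.
Proof. revert k; induction l; simpl; intros k Hk j Hj. contradiction.
  apply in_flat_map in Hk. destruct Hk as [k0 [Hk0 Hk]]. apply in_map_iff in Hk.
  destruct Hk as [b [<- Hb]]. apply in_seq in Hb. unfold upd.
  destruct (Nat.eqb_spec j a).
  - subst. change 2%Z with (Z.of_nat 2). rewrite <- Nat2Z.inj_pow. lia.
  - destruct Hj. congruence. auto. Qed.

Definition G (s : nat -> nat) (l : list nat) (y : nat -> R) : C :=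
  csum (fun k => expi (dotl l k y)) (Lidx s l).

Lemma G_prod s l y : NoDup l -> G s l y = fold_right Cmult 1%C (map (fun j => Dir (2 ^ s j) (y j)) l).
Proof. induction l; intros Hn. unfold G, csum; simpl. unfold dotl; simpl. unfold expi. rewrite cos_0, sin_0.
  apply injective_projections; simpl; ring.
  inversion Hn; subst. simpl. rewrite <- IHl by auto. unfold G. simpl. rewrite csum_flat.
  rewrite <- csum_scal. apply csum_ext. intros k _. rewrite csum_map.
  unfold Dir. rewrite Cmult_comm, <- csum_scal. apply csum_ext. intros b _.
  unfold dotl at 1. simpl. fold (dotl l (upd k a (Z.of_nat b)) y). rewrite dotl_upd by auto.
  unfold upd at 1. rewrite Nat.eqb_refl. rewrite <- INR_IZR_INZ. rewrite expi_add. ring. Qed.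

Lemma Cmod_G s l y : NoDup l -> Cmod (G s l y) = rprod (fun j => Cmod (Dir (2 ^ s j) (y j))) l.
Proof. intros H. rewrite G_prod by auto. clear H. induction l; simpl. apply Cmod_1.
  rewrite Cmod_mult, IHl. reflexivity. Qed.

Definition Pol (d : nat) (s : nat -> nat) (c : nat -> R) : trig_poly :=
  map (fun k => (k, (cos (dotk d k c), - sin (dotk d k c)))) (Lidx s (seq 0 d)).

Lemma tp_csum d f x : (tp_re d f x, tp_im d f x) =
  csum (fun t => ((fst (snd t), snd (snd t)) : C) * expi (dotk d (fst t) x))%C f.
Proof. induction f as [|[k [a b]] f IH]. reflexivity.
  unfold csum in *. simpl. rewrite <- IH. unfold tp_re, tp_im. simpl.
  apply injective_projections; simpl; ring. Qed.

Lemma tp_abs_Pol d s c x : tp_abs d (Pol d s c) x = Cmod (G s (seq 0 d) (fun j => x j - c j)).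
Proof. unfold tp_abs. change (sqrt (tp_re d (Pol d s c) x ^ 2 + tp_im d (Pol d s c) x ^ 2))
  with (Cmod (tp_re d (Pol d s c) x, tp_im d (Pol d s c) x)). rewrite tp_csum. f_equal.
  unfold Pol. rewrite csum_map. unfold G. apply csum_ext. intros k _. simpl.
  rewrite <- dotl_sub. unfold Rminus. rewrite expi_add. rewrite Cmult_comm. f_equal.
  unfold expi. rewrite cos_neg, sin_neg. reflexivity. Qed.

Lemma Pol_TRs d s c : in_TRs d s (Pol d s c).
Proof. unfold in_TRs, Pol. apply Forall_forall. intros t Ht. apply in_map_iff in Ht.
  destruct Ht as [k [<- Hk]]. simpl. intros j Hj. 
  assert (In j (seq 0 d)) by (apply in_seq; lia).
  pose proof (Lidx_range s _ k Hk j H). lia. Qed.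

Lemma sin_lb_ge a : 0 <= a <= 2 -> a / 3 <= sin a.
Proof. intros Ha. assert (Hpi := PI_4). assert (Hpi2 := PI2_1).
  destruct (SIN a) as [H _]; try lra.
  assert (E : sin_lb a = a - a^3/6 + a^5/120 - a^7/5040) by (unfold sin_lb, sin_approx, sin_term; simpl; field).
  rewrite E in H.
  assert (0 <= a^5) by (apply pow_le; lra).
  assert (a^5 * a^2 <= a^5 * 42) by (apply Rmult_le_compat_l; nra).
  assert (a * a^2 <= a * 4) by (apply Rmult_le_compat_l; nra).
  replace (a^7) with (a^5*a^2) in H by ring. replace (a^3) with (a*a^2) in H by ring. lra. Qed.

Lemma sin_half v : 0 <= v <= 1/2 -> v / 2 <= sin (PI * v).
Proof. intros Hv. assert (Hpi := PI_4). assert (Hpi2 := PI2_1).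
  assert (PI * v / 3 <= sin (PI * v)) by (apply sin_lb_ge; nra). nra. Qed.

Lemma sin_pos_case h v : 0 < h -> h <= v <= 1 - h -> h / 2 <= sin (PI * v).
Proof. intros Hh Hv. destruct (Rle_lt_dec v (1/2)).
  - pose proof (sin_half v). lra.
  - replace (PI * v) with (PI - PI * (1 - v)) by ring. rewrite sin_PI_x.
    pose proof (sin_half (1 - v)). lra. Qed.

Lemma sin_abs_lb h u : 0 < h -> h <= Rabs u <= 1 - h -> h / 2 <= Rabs (sin (PI * u)).
Proof. intros Hh Hu. destruct (Rle_lt_dec 0 u).
  - rewrite Rabs_right in Hu by lra. pose proof (sin_pos_case h u Hh Hu).
    rewrite Rabs_right; lra.
  - rewrite Rabs_left in Hu by lra. pose proof (sin_pos_case h (-u) Hh Hu).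
    replace (PI * u) with (- (PI * - u)) by ring. rewrite sin_neg, Rabs_left; lra. Qed.

Lemma pow2_exists x : exists r : nat, x <= 2 ^ r /\ 2 ^ r <= Rmax 1 (2 * x).
Proof.
  assert (Hn : exists N : nat, x <= 2 ^ N).
  { destruct (archimed x) as [H1 _]. exists (Z.to_nat (up x)).
    assert (forall n:nat, INR n <= 2 ^ n).
    { induction n. simpl; lra. rewrite S_INR. simpl. assert (1 <= 2^n) by (apply pow_R1_Rle; lra). lra. }
    destruct (Rle_lt_dec x 0). pose proof (pow_le 2 (Z.to_nat (up x))). lra.
    eapply Rle_trans; [|apply H]. rewrite INR_IZR_INZ. rewrite Z2Nat.id. lra.
    apply le_IZR. lra. }
  destruct Hn as [N HN]. induction N.
  - exists O. split. auto. apply Rmax_l.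
  - destruct (Rle_lt_dec x (2 ^ N)). auto.
    exists (S N). split. auto. eapply Rle_trans; [|apply Rmax_r]. simpl. lra. Qed.

Lemma rprod_nonneg (a : nat -> R) l : (forall i, In i l -> 0 <= a i) -> 0 <= rprod a l.
Proof. induction l; intros H; unfold rprod in *; simpl. lra.
  apply Rmult_le_pos; auto. apply H; simpl; auto. apply IHl. intros; apply H; simpl; auto. Qed.

Lemma rprod_pos (a : nat -> R) l : (forall i, In i l -> 0 < a i) -> 0 < rprod a l.
Proof. induction l; intros H; unfold rprod in *; simpl. lra.
  apply Rmult_lt_0_compat; auto. apply H; simpl; auto. apply IHl. intros; apply H; simpl; auto. Qed.

Lemma rprod_le (a b : nat -> R) l : (forall i, In i l -> 0 <= a i <= b i) -> rprod a l <= rprod b l.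
Proof. induction l; intros H; unfold rprod in *; simpl. lra.
  assert (0 <= fold_right Rmult 1 (map a l)) by (apply rprod_nonneg; intros; apply H; simpl; auto).
  assert (fold_right Rmult 1 (map a l) <= fold_right Rmult 1 (map b l)) by (apply IHl; intros; apply H; simpl; auto).
  destruct (H a0) as [H5 H6]; simpl; auto.
  apply Rmult_le_compat; auto. Qed.

Lemma rprod_mult (a b : nat -> R) l : rprod (fun i => a i * b i) l = rprod a l * rprod b l.
Proof. induction l; unfold rprod in *; simpl. ring. rewrite IHl; ring. Qed.

Lemma rprod_const c (l : list nat) : rprod (fun _ => c) l = c ^ length l.
Proof. induction l; unfold rprod in *; simpl. ring. rewrite IHl; ring. Qed.

Lemma rprod_pow2 (r : nat -> nat) l : rprod (fun i => 2 ^ r i) l = 2 ^ (fold_right Nat.add 0%nat (map r l)).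
Proof. induction l; unfold rprod in *; simpl. ring. rewrite IHl, pow_add; ring. Qed.

Lemma rprod_le_eps (a b : nat -> R) l j e : In j l -> (forall i, In i l -> 0 <= a i <= b i) ->
  a j <= e * b j -> rprod a l <= e * rprod b l.
Proof. induction l; intros Hj H He; unfold rprod in *; simpl. contradiction.
  assert (0 <= fold_right Rmult 1 (map a l)) by (apply rprod_nonneg; intros; apply H; simpl; auto).
  assert (fold_right Rmult 1 (map a l) <= fold_right Rmult 1 (map b l)) by (apply rprod_le; intros; apply H; simpl; auto).
  destruct (H a0) as [H5 H6]; simpl; auto.
  destruct Hj as [<- | Hj].
  - destruct (H a0) as [H3 H4]; simpl; auto.
    replace (e * (b a0 * fold_right Rmult 1 (map b l))) with ((e * b a0) * fold_right Rmult 1 (map b l)) by ring.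
    apply Rmult_le_compat; lra.
  - assert (fold_right Rmult 1 (map a l) <= e * fold_right Rmult 1 (map b l)) by (apply IHl; auto; intros; apply H; simpl; auto).
    replace (e * (b a0 * fold_right Rmult 1 (map b l))) with (b a0 * (e * fold_right Rmult 1 (map b l))) by ring.
    apply Rmult_le_compat; lra. Qed.

Lemma max_le (g : (nat -> R) -> R) T B : 0 <= B -> (forall t, In t T -> g t <= B) ->
  fold_right Rmax 0 (map g T) <= B.
Proof. induction T; intros HB H; simpl. auto. apply Rmax_lub. apply H; simpl; auto.
  apply IHT; auto. intros; apply H; simpl; auto. Qed.

Theorem theorem2p2 :
  forall (d : nat), (2 <= d)%nat ->
  forall (C1 : R), 0 < C1 ->
  exists C : R, 0 < C /\
    forall (n : nat) (T : list (nat -> R)),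
      (forall t, In t T -> in_unit_cube d t) ->
      univ_disc d n T C1 ->
      forall D, disp d T D -> D <= C * (/ 2) ^ n.
Proof.
  intros d Hd C1 HC1.
  set (K := 4 / C1 + 1).
  assert (HK : 1 < K) by (unfold K; assert (0 < 4/C1) by (apply Rdiv_lt_0_compat; lra); lra).
  assert (HK2 : 2 / K < C1).
  { apply (Rmult_lt_reg_r K). lra. replace (2 / K * K) with 2 by (field; lra).
    unfold K. replace (C1 * (4 / C1 + 1)) with (4 + C1) by (field; lra). lra. }
  exists ((4 * K) ^ d). split. apply pow_lt; lra.
  intros n T HT Hdisc D HD. apply (proj2 HD).
  intros v [x [y [[Hx [Hy Hxy]] [Hemp ->]]]].
  destruct (Rle_lt_dec (vol d x y) ((4 * K) ^ d * (/ 2) ^ n)) as [Hle|Hlt]; auto. exfalso.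
  set (h := fun j => (y j - x j) / 2).
  set (c := fun j => (x j + y j) / 2).
  assert (Hh : forall j, (j < d)%nat -> 0 < h j <= 1/2).
  { intros j Hj. unfold h. specialize (Hx j Hj). specialize (Hy j Hj). specialize (Hxy j Hj). lra. }
  set (r := fun j => proj1_sig (constructive_indefinite_description _ (pow2_exists (K / h j)))).
  assert (Hr : forall j, (j < d)%nat -> K / h j <= 2 ^ r j <= 2 * K / h j).
  { intros j Hj. unfold r. destruct (constructive_indefinite_description _ _) as [rj [H1 H2]]. simpl.
    split; auto. destruct (Hh j Hj) as [Hh1 Hh2].
    assert (1 <= 2 * (K / h j)).
    { apply (Rmult_le_reg_r (h j)); auto. field_simplify; lra. }
    rewrite Rmax_right in H2 by lra. unfold Rdiv in *. lra. }
  set (Rs := fold_right Nat.add 0%nat (map r (seq 0 d))).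
  assert (HRs : (Rs <= n)%nat).
  { destruct (Nat.le_gt_cases Rs n) as [|Hgt]; auto. exfalso.
    assert (E1 : rprod (fun j => 2 ^ r j * (y j - x j)) (seq 0 d) <= rprod (fun _ => 4 * K) (seq 0 d)).
    { apply rprod_le. intros j Hj. apply in_seq in Hj. assert (Hj' : (j < d)%nat) by lia.
      destruct (Hr j Hj') as [H1 H2]. destruct (Hh j Hj') as [H3 H4].
      assert (y j - x j = 2 * h j) by (unfold h; field). rewrite H.
      split. apply Rmult_le_pos. apply pow_le; lra. lra.
      apply (Rmult_le_reg_r (/ h j)). apply Rinv_0_lt_compat; lra.
      replace (2 ^ r j * (2 * h j) * / h j) with (2 * 2 ^ r j) by (field; lra).
      replace (4 * K * / h j) with (2 * (2 * K / h j)) by (field; lra). lra. }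
    rewrite rprod_mult, rprod_const, length_seq, rprod_pow2 in E1. fold Rs in E1.
    change (rprod (fun j => y j - x j) (seq 0 d)) with (vol d x y) in E1.
    assert (2 ^ n <= 2 ^ Rs) by (apply Rle_pow; lia || lra).
    assert (0 < (/2)^n) by (apply pow_lt; lra).
    assert ((/2)^n * 2^n = 1) by (rewrite <- Rpow_mult_distr; rewrite Rinv_l by lra; apply pow1).
    assert (0 < (4*K)^d) by (apply pow_lt; lra).
    assert (2 ^ Rs * ((4 * K) ^ d * (/ 2) ^ n) < 2 ^ Rs * vol d x y) by (apply Rmult_lt_compat_l; auto; apply pow_lt; lra).
    assert (2 ^ n * ((4 * K) ^ d * (/ 2) ^ n) <= 2 ^ Rs * ((4 * K) ^ d * (/ 2) ^ n)) by (apply Rmult_le_compat_r; nra).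
    nra. }
  set (s := fun j => (r j + (if Nat.eqb j 0 then n - Rs else 0))%nat).
  assert (Hl1 : l1 d s = n).
  { unfold l1. destruct d as [|d']. lia. cbn [seq map fold_right]. rewrite <- seq_shift.
    unfold Rs in *. cbn [seq map fold_right] in *. rewrite <- seq_shift in *. rewrite !map_map in *.
    assert (map (fun x => s (S x)) (seq 0 d') = map (fun x => r (S x)) (seq 0 d')) as ->.
    { apply map_ext. intros a. unfold s. replace (S a =? 0) with false by reflexivity. lia. }
    unfold s at 1. replace (0 =? 0) with true by reflexivity. rewrite <- seq_shift, map_map. lia. }
  assert (Hs : forall j, (j < d)%nat -> K / h j <= INR (2 ^ s j)).
  { intros j Hj. rewrite pow_INR. simpl INR. replace (1+1) with 2 by ring.
    eapply Rle_trans. apply (Hr j Hj). apply Rle_pow. lra. unfold s; lia. }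
  set (c' := fun j => 2 * PI * c j).
  set (f := Pol d s c').
  set (PM := rprod (fun j => INR (2 ^ s j)) (seq 0 d)).
  assert (HPM : 0 < PM).
  { apply rprod_pos. intros i _. apply lt_0_INR. apply Nat.neq_0_lt_0. apply Nat.pow_nonzero. lia. }
  assert (Habs : forall z, tp_abs d f z = rprod (fun j => Cmod (Dir (2 ^ s j) (z j - c' j))) (seq 0 d)).
  { intros z. unfold f. rewrite tp_abs_Pol. apply Cmod_G. apply seq_NoDup. }
  assert (Hbnd : forall z, tp_abs d f z <= PM).
  { intros z. rewrite Habs. apply rprod_le. intros i _. split. apply Cmod_ge_0. apply Dir_le_M. }
  destruct (completeness (fun r => exists x, in_torus d x /\ r = tp_abs d f x)) as [nf Hnf].
  { exists PM. intros w [z [_ ->]]. apply Hbnd. }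
  { exists (tp_abs d f c'). exists c'. split; auto. intros j Hj. unfold c', c.
    specialize (Hx j Hj). specialize (Hy j Hj). assert (Hpi := PI_RGT_0). nra. }
  pose proof (Hdisc s f Hl1 (Pol_TRs d s c') nf Hnf) as Hmain.
  assert (Hc : PM <= nf).
  { apply (proj1 Hnf). exists c'. split.
    intros j Hj. unfold c', c. specialize (Hx j Hj). specialize (Hy j Hj). assert (Hpi := PI_RGT_0). nra.
    rewrite Habs. unfold PM. unfold rprod. f_equal. apply map_ext. intros j. rewrite Rminus_diag. symmetry. apply Dir_0. }
  assert (Hmax : max_on d f T <= 2 / K * PM).
  { unfold max_on. apply max_le. apply Rmult_le_pos; [|lra]. apply Rlt_le, Rdiv_lt_0_compat; lra.
    intros t Ht. specialize (Hemp t Ht). specialize (HT t Ht).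
    unfold in_box in Hemp. apply not_all_ex_not in Hemp. destruct Hemp as [j Hj].
    apply imply_to_and in Hj. destruct Hj as [Hjd Hj].
    destruct (Hh j Hjd) as [Hh1 Hh2]. pose proof (Hs j Hjd) as Hsj.
    assert (HMj : K <= h j * INR (2 ^ s j)).
    { apply (Rmult_le_reg_r (/ h j)). apply Rinv_0_lt_compat; lra.
      replace (h j * INR (2 ^ s j) * / h j) with (INR (2 ^ s j)) by (field; lra). unfold Rdiv in Hsj. lra. }
    rewrite Habs. apply Rle_trans with ((2 / (h j * INR (2 ^ s j))) * PM).
    - apply rprod_le_eps with j. apply in_seq; lia.
      intros i _. split. apply Cmod_ge_0. apply Dir_le_M.
      set (u := t j - c j).
      assert (Hu : h j <= Rabs u <= 1 - h j).
      { specialize (HT j Hjd). specialize (Hx j Hjd). specialize (Hy j Hjd). specialize (Hxy j Hjd).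
        unfold u, c, h. unfold Rabs. destruct (Rcase_abs _); split; try lra;
        destruct (Rle_lt_dec (x j) (t j)); try lra; assert (y j <= t j) by lra; lra. }
      pose proof (sin_abs_lb (h j) u Hh1 Hu) as Hsin.
      cbv beta. assert (Eth : (2 * PI * t j - c' j) / 2 = PI * u) by (unfold u, c', c; field).
      eapply Rle_trans. apply Dir_bound. rewrite Eth. intros E. rewrite E, Rabs_R0 in Hsin. lra.
      rewrite Eth. replace (2 / (h j * INR (2 ^ s j)) * INR (2 ^ s j)) with (2 / h j).
      2:{ field. split; nra. }
      apply (Rmult_le_reg_r (Rabs (sin (PI * u)) * h j)). nra.
      field_simplify; try lra.
    - apply Rmult_le_compat_r. lra.
      apply Rmult_le_compat_l. lra. apply Rinv_le_contravar; lra. }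
  assert (C1 * PM <= C1 * nf) by (apply Rmult_le_compat_l; lra).
  assert (2 / K * PM < C1 * PM) by (apply Rmult_lt_compat_r; lra).
  lra.
Qed.
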